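(* Let $\alpha>0$, $\beta,\eta,\kappa\in\mathbb{R}$, $\rho>0$, $p\ge 1$, and $0\le a<x$. Let $f,g$ be two positive functions on $[0,\infty)$ with $f,g\in X^{p}_{c}(a,x)$ (for some $c\in\mathbb{R}$), such that ${}^{\rho}\mathcal{I}^{\alpha,\beta}_{a+,\eta,\kappa}f(x)<\infty$ and ${}^{\rho}\mathcal{I}^{\alpha,\beta}_{a+,\eta,\kappa}g(x)<\infty$. If there are real numbers $m,M>0$ with $0<m\leq \frac{f(t)}{g(t)}\leq M$ for all $t\in[a,x]$, then $$\frac{1}{M}\,{}^{\rho}\mathcal{I}^{\alpha,\beta}_{a+,\eta,\kappa}(fg)(x)\leq\frac{1}{(m+1)(M+1)}\,{}^{\rho}\mathcal{I}^{\alpha,\beta}_{a+,\eta,\kappa}(f+g)^{2}(x)\leq\frac{1}{m}\,{}^{\rho}\mathcal{I}^{\alpha,\beta}_{a+,\eta,\kappa}(fg)(x).$$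
   Context: For $c\in\mathbb{R}$ and $1\le p<\infty$, $X^{p}_{c}(a,b)$ denotes the space of Lebesgue measurable functions $f$ on $(a,b)$ with $\left(\int_a^b |t^{c}f(t)|^{p}\,\frac{dt}{t}\right)^{1/p}<\infty$. For $\alpha>0$, $\beta,\eta,\kappa\in\mathbb{R}$, $\rho>0$, $0\le a<x$, and a function $\varphi$, the generalized (Katugampola) fractional integral is $${}^{\rho}\mathcal{I}^{\alpha,\beta}_{a+,\eta,\kappa}\varphi(x)=\frac{\rho^{1-\beta}x^{\kappa}}{\Gamma(\alpha)}\int_{a}^{x}\frac{\tau^{\rho(\eta+1)-1}}{(x^{\rho}-\tau^{\rho})^{1-\alpha}}\varphi(\tau)\,d\tau,$$ whenever the integral exists. ${}^{\rho}\mathcal{I}^{\alpha,\beta}_{a+,\eta,\kappa}(fg)(x)$ and ${}^{\rho}\mathcal{I}^{\alpha,\beta}_{a+,\eta,\kappa}(f+g)^{2}(x)$ denote the operator applied to $\tau\mapsto f(\tau)g(\tau)$, resp. $\tau\mapsto(f(\tau)+g(\tau))^2$, evaluated at $x$. *)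

(* Defs.v *)
From HB Require Import structures.
From mathcomp Require Import all_boot all_order all_algebra.
From mathcomp Require Import all_classical all_reals all_analysis.
Set Implicit Arguments. Unset Strict Implicit. Unset Printing Implicit Defensive.
Import Order.TTheory GRing.Theory Num.Theory.
Local Open Scope classical_set_scope.
Local Open Scope ring_scope.

Definition Gammaf {R : realType} (a : R) : R :=
  fine (\int[@lebesgue_measure R]_(t in `]0%R, +oo[) ((t `^ (a - 1)) * expR (- t))%:E)%E.

Definition Xpc {R : realType} (c p a b : R) (f : R -> R) : Prop :=
  measurable_fun `]a, b[ f /\
  (\int[@lebesgue_measure R]_(t in `]a, b[)
      ((`|t `^ c * f t| `^ p) / t)%:E < +oo)%E.

Definition katugampola {R : realType} (rho alpha beta eta kappa a : R)
    (phi : R -> R) (x : R) : \bar R :=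
  ((rho `^ (1 - beta) * x `^ kappa / Gammaf alpha)%:E *
   \int[@lebesgue_measure R]_(tau in `]a, x[)
      ((tau `^ (rho * (eta + 1) - 1) /
        (x `^ rho - tau `^ rho) `^ (1 - alpha)) * phi tau)%:E)%E.

(* Main.v *)
Require Import Defs.
From HB Require Import structures.
From mathcomp Require Import all_boot all_order all_algebra.
From mathcomp Require Import all_classical all_reals all_analysis.
From mathcomp Require Import lra.
Import Order.TTheory GRing.Theory Num.Theory.
Local Open Scope classical_set_scope.
Local Open Scope ring_scope.
Lemma ptw (R : realType) (u v m M : R) : 0 < u -> 0 < v -> 0 < m -> 0 < M ->
  m * v <= u -> u <= M * v ->
  M^-1 * (u * v) <= ((m + 1) * (M + 1))^-1 * (u + v) ^+ 2 /\
  ((m + 1) * (M + 1))^-1 * (u + v) ^+ 2 <= m^-1 * (u * v).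
Proof.
move=> u0 v0 m0 M0 h1 h2.
have m1 : 0 < (m + 1) * (M + 1) by apply: mulr_gt0; lra.
have A : (m+1)*(M+1)*(u*v) <= M*(u+v)^+2.
  have e1 : (M + 1) * u <= M * (u + v) by lra.
  have e2 : (m + 1) * v <= u + v by lra.
  have n1 : 0 <= (M + 1) * u by apply: mulr_ge0; lra.
  have n2 : 0 <= (m + 1) * v by apply: mulr_ge0; lra.
  have H := ler_pM n1 n2 e1 e2.
  rewrite expr2; lra.
have B : m*(u+v)^+2 <= (m+1)*(M+1)*(u*v).
  have e1 : m * (u + v) <= (m + 1) * u by lra.
  have e2 : u + v <= (M + 1) * v by lra.
  have n1 : 0 <= m * (u + v) by apply: mulr_ge0; lra.
  have n2 : 0 <= u + v by lra.
  have H := ler_pM n1 n2 e1 e2.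
  rewrite expr2; lra.
split.
- by rewrite ler_pdivrMl // mulrCA ler_pdivlMl.
- by rewrite ler_pdivrMl // mulrCA ler_pdivlMl.
Qed.
Lemma kern_meas (R : realType) (rho alpha eta a x : R) :
  measurable_fun `]a, x[ (fun tau : R => tau `^ (rho * (eta + 1) - 1) /
        (x `^ rho - tau `^ rho) `^ (1 - alpha)).
Proof.
apply: (measurable_funS (E := setT)) => //.
apply: (@eq_measurable_fun _ _ _ _ _ (fun tau : R => tau `^ (rho * (eta + 1) - 1) *
        (x `^ rho - tau `^ rho) `^ (- (1 - alpha)))).
  by move=> t _; rewrite powRN.
apply: measurable_realfun.measurable_funM; first exact: measurable_realfun.measurable_powR.
apply: (measurableT_comp (f := fun y : R => y `^ (- (1 - alpha)))).
  exact: measurable_realfun.measurable_powR.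
apply: measurable_realfun.measurable_funB; first exact: measurable_cst.
exact: measurable_realfun.measurable_powR.
Qed.

Lemma katu_mono (R : realType) (rho alpha beta eta kappa a x c1 c2 : R)
  (phi1 phi2 : R -> R) :
  0 <= c1 -> 0 <= c2 ->
  measurable_fun `]a, x[ phi1 -> measurable_fun `]a, x[ phi2 ->
  (forall t, a < t < x -> 0 <= phi1 t) -> (forall t, a < t < x -> 0 <= phi2 t) ->
  (forall t, a < t < x -> c1 * phi1 t <= c2 * phi2 t) ->
  (c1%:E * katugampola rho alpha beta eta kappa a phi1 x <=
   c2%:E * katugampola rho alpha beta eta kappa a phi2 x)%E.
Proof.
move=> c10 c20 m1 m2 p1 p2 h.
rewrite /katugampola.
set C := (rho `^ (1 - beta) * x `^ kappa / Gammaf alpha).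
set K := (fun tau : R => tau `^ (rho * (eta + 1) - 1) /
        (x `^ rho - tau `^ rho) `^ (1 - alpha)).
have C0 : 0 <= C.
  rewrite /C; apply: divr_ge0; first by apply: mulr_ge0; exact: powR_ge0.
  by apply: fine_ge0; apply: integral_ge0 => t _; rewrite lee_fin mulr_ge0 // ?powR_ge0 ?expR_ge0.
have K0 t : 0 <= K t by rewrite /K divr_ge0 // powR_ge0.
have mK : measurable_fun `]a, x[ K by exact: kern_meas.
rewrite (muleCA c1%:E) (muleCA c2%:E).
apply: lee_wpmul2l; first by rewrite lee_fin.
have D t : t \in `]a, x[ -> a < t < x by rewrite in_itv.
rewrite -!ge0_integralZl_EFin //; last first.
- by apply/measurable_realfun.measurable_EFinP; apply: measurable_realfun.measurable_funM.
- move=> t /D Dt; rewrite lee_fin; apply: mulr_ge0; [exact: K0|first [exact: (p1 t Dt)|exact: (p2 t Dt)]].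
- by apply/measurable_realfun.measurable_EFinP; apply: measurable_realfun.measurable_funM.
- move=> t /D Dt; rewrite lee_fin; apply: mulr_ge0; [exact: K0|first [exact: (p1 t Dt)|exact: (p2 t Dt)]].
apply: ge0_le_integral => //.
- move=> t /D Dt; rewrite -EFinM lee_fin; apply: mulr_ge0 => //; apply: mulr_ge0; [exact: K0|exact: (p1 t Dt)].
- apply: measurable_funeM.
  by apply/measurable_realfun.measurable_EFinP; apply: measurable_realfun.measurable_funM.
- apply: measurable_funeM.
  by apply/measurable_realfun.measurable_EFinP; apply: measurable_realfun.measurable_funM.
- move=> t /D Dt; rewrite -!EFinM lee_fin.
  have := mulr_ge0 (K0 t) (p1 t Dt); have := h t Dt; have := K0 t.
  move=> K0t hh _; rewrite (mulrCA c1) (mulrCA c2); by apply: ler_wpM2l.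
Qed.
Theorem theorem14 (R : realType) (alpha beta eta kappa rho p c a x m M : R)
  (f g : R -> R) :
  0 < alpha -> 0 < rho -> 1 <= p -> 0 <= a -> a < x ->
  (forall t, 0 <= t -> 0 < f t) -> (forall t, 0 <= t -> 0 < g t) ->
  Xpc c p a x f -> Xpc c p a x g ->
  (katugampola rho alpha beta eta kappa a f x < +oo)%E ->
  (katugampola rho alpha beta eta kappa a g x < +oo)%E ->
  0 < m -> 0 < M ->
  (forall t, a <= t <= x -> m <= f t / g t <= M) ->
  ((M^-1)%R%:E * katugampola rho alpha beta eta kappa a (fun t => (f t * g t)%R) x
     <= (((m + 1) * (M + 1))^-1)%R%:E *
        katugampola rho alpha beta eta kappa a (fun t => ((f t + g t) ^+ 2)%R) x)%E /\
  ((((m + 1) * (M + 1))^-1)%R%:E *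
        katugampola rho alpha beta eta kappa a (fun t => ((f t + g t) ^+ 2)%R) x
     <= (m^-1)%R%:E * katugampola rho alpha beta eta kappa a (fun t => (f t * g t)%R) x)%E.
Proof.
move=> al0 rh0 p1 a0 ax fp gp [mf _] [mg _] _ _ m0 M0 hb.
have pt t : a < t < x -> M^-1 * (f t * g t) <= ((m + 1) * (M + 1))^-1 * (f t + g t) ^+ 2 /\
  ((m + 1) * (M + 1))^-1 * (f t + g t) ^+ 2 <= m^-1 * (f t * g t).
  move=> /andP[hat tx].
  have t0 : 0 <= t := le_trans a0 (ltW hat).
  have ft := fp t t0; have gt := gp t t0.
  have /andP[h1 h2] : m <= f t / g t <= M by apply: hb; rewrite (ltW hat) (ltW tx).
  rewrite ler_pdivlMr // in h1; rewrite ler_pdivrMr // in h2.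
  by apply: ptw => //; rewrite mulrC.
have mfg : measurable_fun `]a, x[ (fun t => (f t * g t)%R).
  exact: measurable_realfun.measurable_funM.
have mfg2 : measurable_fun `]a, x[ (fun t => ((f t + g t) ^+ 2)%R).
  apply: measurable_realfun.measurable_funX.
  exact: measurable_realfun.measurable_funD.
have nn1 t : a < t < x -> 0 <= f t * g t.
  move=> /andP[hat _]; have t0 : 0 <= t := le_trans a0 (ltW hat).
  by apply: mulr_ge0; apply: ltW; [apply: fp|apply: gp].
have nn2 t : a < t < x -> 0 <= (f t + g t) ^+ 2.
  by move=> _; rewrite sqr_ge0.
have k0 : 0 <= ((m + 1) * (M + 1))^-1 by rewrite invr_ge0 mulr_ge0 // addr_ge0 // ltW.
have iM : 0 <= M^-1 by rewrite invr_ge0 ltW.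
have im : 0 <= m^-1 by rewrite invr_ge0 ltW.
split.
- exact: (@katu_mono R rho alpha beta eta kappa a x _ _
    (fun t => (f t * g t)%R) (fun t => ((f t + g t) ^+ 2)%R) iM k0 mfg mfg2 nn1 nn2
    (fun t ht => proj1 (pt t ht))).
- exact: (@katu_mono R rho alpha beta eta kappa a x _ _
    (fun t => ((f t + g t) ^+ 2)%R) (fun t => (f t * g t)%R) k0 im mfg2 mfg nn2 nn1
    (fun t ht => proj2 (pt t ht))).
Qed.
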